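(* For $n\ge 3$, $M_2(CP_{n-1})\simeq M_2(CC_n)\simeq S^{2n-1}$, where $CP_{n-1}$ is the clawed path of length $n-1$ and $CC_n$ is the clawed $n$-cycle.
   Context: A path of length $k$ has $k$ edges. For a graph $G$ of maximum degree at most $3$, the clawed graph $CG$ is obtained by subdividing every edge of $G$ and then attaching new leaves to every original vertex so that every original vertex has degree exactly $3$; $CP_{k}$ is the clawed graph of the path of length $k$ and $CC_n$ is the clawed graph of the cycle on $n$ vertices. $M_2(G)$ is the simplicial complex whose vertices are the edges of $G$ and whose faces are the $2$-matchings of $G$ (edge sets in which every vertex has degree at most $2$). *)

(* Defs.v *)
From HB Require Import structures.
From mathcomp Require Import all_boot all_order all_algebra.
From mathcomp Require Import reals.
Set Implicit Arguments. Unset Strict Implicit. Unset Printing Implicit Defensive.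
Import Order.TTheory GRing.Theory Num.Theory.

(* A simple graph is a symmetric irreflexive relation [adj] on a finType V.
   Edges are the 2-element vertex sets {u,v} with adj u v. *)
Definition edges (V : finType) (adj : rel V) : {set {set V}} :=
  [set e : {set V} | [exists u, exists v, adj u v && (e == [set u; v])]].

Definition deg (V : finType) (adj : rel V) (v : V) : nat := #|[set u | adj v u]|.

(* Vertices of the clawed graph CG: original vertices (inl v), one
   subdivision vertex per 2-subset e of V (only those with e an edge of G
   are used; the others are isolated), and potential leaves (v, i), i < 3;
   the leaf (v,i) is attached to v iff i < 3 - deg v, so that every original
   vertex ends up with degree exactly 3 (when G has max degree <= 3). *)
Definition claw_vertex (V : finType) : finType := (V + ({set V} + (V * 'I_3)))%type.

Definition claw_half (V : finType) (adj : rel V) (x y : claw_vertex V) : bool :=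
  match x, y with
  | inl v, inr (inl e) => (e \in edges adj) && (v \in e)
  | inl v, inr (inr (w, i)) => (v == w) && (i < 3 - deg adj v)
  | _, _ => false
  end.

Definition claw_adj (V : finType) (adj : rel V) : rel (claw_vertex V) :=
  fun x y => claw_half adj x y || claw_half adj y x.

Definition path_adj (k : nat) : rel 'I_k.+1 :=
  fun i j => (i.+1 == j :> nat) || (j.+1 == i :> nat).

Definition cycle_adj (n : nat) : rel 'I_n :=
  fun i j => (i != j) && ((i.+1 %% n == j :> nat) || (j.+1 %% n == i :> nat)).

(* Faces of M_2(G): sets F of edges of G with every vertex in at most 2
   edges of F.  The complex has ground type {set V}; its vertices are exactly
   the edges of G (singletons of edges are faces). *)
Definition M2 (V : finType) (adj : rel V) : {set {set {set V}}} :=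
  [set F : {set {set V}} | (F \subset edges adj) &&
     [forall v : V, #|[set e in F | v \in e]| <= 2]].

Local Open Scope ring_scope.

Section Topo.
Variable R : realType.

Definition dist (T : finType) (x y : T -> R) : R := \big[Num.max/0]_(i : T) `|x i - y i|.

Definition realization (T : finType) (K : {set {set T}}) (x : T -> R) : Prop :=
  (forall i, 0 <= x i) /\ \sum_(i : T) x i = 1 /\ [set i | x i != 0] \in K.

Definition sphere (m : nat) (y : 'I_m.+1 -> R) : Prop :=
  \sum_(i : 'I_m.+1) y i ^+ 2 = 1.

Definition cont_on (T U : finType) (A : (T -> R) -> Prop) (f : (T -> R) -> (U -> R)) : Prop :=
  forall x, A x -> forall e : R, 0 < e -> exists2 d : R, 0 < d &
    forall y, A y -> dist x y < d -> dist (f x) (f y) < e.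

Definition maps_into (T U : finType) (A : (T -> R) -> Prop) (B : (U -> R) -> Prop)
  (f : (T -> R) -> (U -> R)) : Prop := forall x, A x -> B (f x).

Definition homotopy_on (T : finType) (A : (T -> R) -> Prop)
  (H : R -> (T -> R) -> (T -> R)) (f0 f1 : (T -> R) -> (T -> R)) : Prop :=
  [/\ forall t x, 0 <= t <= 1 -> A x -> A (H t x),
      forall t x, 0 <= t <= 1 -> A x -> forall e : R, 0 < e -> exists2 d : R, 0 < d &
        forall s y, 0 <= s <= 1 -> A y -> `|s - t| < d -> dist x y < d ->
          dist (H s y) (H t x) < e,
      forall x, A x -> H 0 x = f0 x &
      forall x, A x -> H 1 x = f1 x].

Definition homotopy_equivalent (T U : finType) (A : (T -> R) -> Prop) (B : (U -> R) -> Prop) : Prop :=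
  exists (f : (T -> R) -> (U -> R)) (g : (U -> R) -> (T -> R)),
    [/\ maps_into A B f, maps_into B A g, cont_on A f & cont_on B g] /\
    (exists H, homotopy_on A H (fun x => g (f x)) id) /\
    (exists K, homotopy_on B K (fun y => f (g y)) id).

End Topo.

Arguments realization R {T} K x.
Arguments homotopy_equivalent R {T U} A B.
Arguments path_adj : clear implicits.
Arguments cycle_adj : clear implicits.
Arguments sphere : clear implicits.

(* Main.v *)
Require Import Defs.
From HB Require Import structures.
From mathcomp Require Import all_boot all_order all_algebra.
From mathcomp Require Import reals.
From mathcomp Require Import ring lra zify.
From Stdlib Require Import FunctionalExtensionality.
Set Implicit Arguments. Unset Strict Implicit. Unset Printing Implicit Defensive.
Import Order.TTheory GRing.Theory Num.Theory.

Module M1.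
Local Open Scope ring_scope.

Section Cont.
Variable R : realType.
Variable T : finType.
Implicit Types (x y : T -> R).

Lemma bigmax_ge (I : eqType) (r : seq I) (F : I -> R) i :
  i \in r -> F i <= \big[Num.max/0]_(j <- r) F j.
Proof.
elim: r => [//|a r IH]; rewrite inE big_cons => /orP [/eqP ->|/IH H].
  by rewrite le_max lexx.
by rewrite le_max H orbT.
Qed.

Lemma le_dist x y i : `|x i - y i| <= dist x y.
Proof. by apply: (bigmax_ge (fun j => `|x j - y j|)); rewrite mem_index_enum. Qed.

Lemma dist_lt x y (e : R) : 0 < e -> (forall i, `|x i - y i| < e) -> dist x y < e.
Proof.
move=> e0 H; rewrite /dist; apply: (big_ind (fun v => v < e)) => //.
by move=> a b Ha Hb; rewrite gt_max Ha Hb.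
Qed.

Lemma distC x y : dist x y = dist y x.
Proof. by rewrite /dist; apply: eq_bigr => i _; rewrite distrC. Qed.

Definition ctsr (A : (T -> R) -> Prop) (phi : (T -> R) -> R) : Prop :=
  forall x, A x -> forall e : R, 0 < e -> exists2 d : R, 0 < d &
    forall y, A y -> dist x y < d -> `|phi x - phi y| < e.

Variable A : (T -> R) -> Prop.

Lemma ctsr_ext f g : (forall x, f x = g x) -> ctsr A f -> ctsr A g.
Proof. by move=> fg cf x Ax e e0; have [d d0 H] := cf x Ax e e0; exists d => // y Ay h; rewrite -!fg; apply: H. Qed.

Lemma ctsr_const c : ctsr A (fun _ => c).
Proof. by move=> x _ e e0; exists 1 => // y _ _; rewrite subrr normr0. Qed.

Lemma ctsr_coord i : ctsr A (fun x => x i).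
Proof.
move=> x _ e e0; exists e => // y _ H; exact: le_lt_trans (le_dist _ _ _) H.
Qed.

Lemma ctsr_add f g : ctsr A f -> ctsr A g -> ctsr A (fun x => f x + g x).
Proof.
move=> cf cg x Ax e e0.
have e2: 0 < e / 2 by rewrite divr_gt0.
have [d1 d10 H1] := cf x Ax _ e2; have [d2 d20 H2] := cg x Ax _ e2.
exists (Num.min d1 d2); first by rewrite lt_min d10 d20.
move=> y Ay; rewrite lt_min => /andP [h1 h2].
have := H1 y Ay h1; have := H2 y Ay h2.
have -> : f x + g x - (f y + g y) = (f x - f y) + (g x - g y) by ring.
move=> a b; apply: le_lt_trans (ler_normD _ _) _; lra.
Qed.

Lemma ctsr_opp f : ctsr A f -> ctsr A (fun x => - f x).
Proof.
move=> cf x Ax e e0; have [d d0 H] := cf x Ax _ e0; exists d => // y Ay h.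
by rewrite -opprD normrN; apply: H.
Qed.

Lemma ctsr_sub f g : ctsr A f -> ctsr A g -> ctsr A (fun x => f x - g x).
Proof. by move=> cf cg; apply: ctsr_add => //; apply: ctsr_opp. Qed.

Lemma ctsr_mul f g : ctsr A f -> ctsr A g -> ctsr A (fun x => f x * g x).
Proof.
move=> cf cg x Ax e e0.
set a := `|f x|; set b := `|g x|.
have a0 : 0 <= a by apply: normr_ge0.
have b0 : 0 <= b by apply: normr_ge0.
have e1 : 0 < Num.min 1 (e / (2 * (a + 1))).
  by rewrite lt_min ltr01 /= divr_gt0 // mulr_gt0 //; lra.
have e2 : 0 < e / (2 * (b + 2)) by rewrite divr_gt0 // mulr_gt0 //; lra.
have [d1 d10 H1] := cg x Ax _ e1; have [d2 d20 H2] := cf x Ax _ e2.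
exists (Num.min d1 d2); first by rewrite lt_min d10 d20.
move=> y Ay; rewrite lt_min => /andP [h1 h2].
have := H1 y Ay h1; rewrite lt_min => /andP [k1 k2].
have k3 := H2 y Ay h2.
have -> : f x * g x - f y * g y = f x * (g x - g y) + g y * (f x - f y) by ring.
have gy : `|g y| <= b + 1.
  have -> : g y = g x - (g x - g y) by ring.
  apply: le_trans (ler_normB _ _) _; rewrite /b; lra.
apply: le_lt_trans (ler_normD _ _) _; rewrite !normrM.
have t1 : `|f x| * `|g x - g y| <= a * (e / (2 * (a + 1))).
  by apply: ler_wpM2l => //; apply: ltW.
have t2 : `|g y| * `|f x - f y| <= (b + 1) * (e / (2 * (b + 2))).
  apply: ler_pM; [exact: normr_ge0|exact: normr_ge0|exact: gy|exact: ltW].  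
have t3 : a * (e / (2 * (a + 1))) < e / 2.
  have -> : a * (e / (2 * (a + 1))) = e / 2 - e / (2 * (a + 1)).
    by field; lra.
  have : 0 < e / (2 * (a + 1)) by rewrite divr_gt0 // mulr_gt0 //; lra.
  lra.
have t4 : (b + 1) * (e / (2 * (b + 2))) < e / 2.
  have -> : (b + 1) * (e / (2 * (b + 2))) = e / 2 - e / (2 * (b + 2)).
    by field; lra.
  have : 0 < e / (2 * (b + 2)) by rewrite divr_gt0 // mulr_gt0 //; lra.
  lra.
lra.
Qed.

Lemma ctsr_inv f : ctsr A f -> (forall x, A x -> f x != 0) -> ctsr A (fun x => (f x)^-1).
Proof.
move=> cf nz x Ax e e0.
set a := `|f x|.
have a0 : 0 < a by rewrite normr_gt0 nz.
have e1 : 0 < Num.min (a / 2) (e * a ^+ 2 / 2).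
  by rewrite lt_min !divr_gt0 ?mulr_gt0 ?exprn_gt0.
have [d d0 H] := cf x Ax _ e1; exists d => // y Ay h.
have := H y Ay h; rewrite lt_min => /andP [k1 k2].
have fy : a / 2 <= `|f y|.
  have -> : f y = f x - (f x - f y) by ring.
  apply: le_trans (lerB_normD _ _); rewrite ?normrN; have aE : `|f x| = a by []; lra.
have fy0 : 0 < `|f y| by apply: lt_le_trans fy; rewrite divr_gt0.
have fy0' : f y != 0 by rewrite -normr_gt0.
have fx0 := nz x Ax.
have -> : (f x)^-1 - (f y)^-1 = (f y - f x) / (f x * f y).
  by field; apply/andP; split.
rewrite normrM normfV normrM.
have -> : `|f y - f x| = `|f x - f y| by rewrite distrC.
rewrite ltr_pdivrMr ?mulr_gt0 //.
apply: lt_le_trans k2 _.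
rewrite -mulrA ler_pM2l //.
have aE : `|f x| = a by [].
rewrite aE expr2; have hh := ler_wpM2l (ltW a0) fy; lra.
Qed.

Lemma ctsr_sqrt f : ctsr A f -> (forall x, 0 <= f x) -> (forall x, A x -> 0 < f x) ->
  ctsr A (fun x => Num.sqrt (f x)).
Proof.
move=> cf ge0 pos x Ax e e0.
have sx : 0 < Num.sqrt (f x) by rewrite sqrtr_gt0 pos.
have [d d0 H] := cf x Ax _ (mulr_gt0 e0 sx); exists d => // y Ay h.
have k := H y Ay h.
have sy : 0 <= Num.sqrt (f y) by apply: sqrtr_ge0.
have eq : f x - f y = (Num.sqrt (f x) - Num.sqrt (f y)) * (Num.sqrt (f x) + Num.sqrt (f y)).
  by rewrite -subr_sqr !sqr_sqrtr.
rewrite eq normrM in k.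
have : `|Num.sqrt (f x) - Num.sqrt (f y)| * Num.sqrt (f x) < e * Num.sqrt (f x).
  apply: le_lt_trans k; apply: ler_wpM2l; first exact: normr_ge0.
  rewrite ger0_norm; lra.
by rewrite ltr_pM2r.
Qed.

Lemma min_close (a b c d e : R) : `|a - c| < e -> `|b - d| < e ->
  `|Num.min a b - Num.min c d| < e.
Proof.
rewrite !ltr_norml => /andP [h1 h2] /andP [h3 h4].
case: (ltrP a b) => k1; case: (ltrP c d) => k2; apply/andP; split; lra.
Qed.

Lemma ctsr_min f g : ctsr A f -> ctsr A g -> ctsr A (fun x => Num.min (f x) (g x)).
Proof.
move=> cf cg x Ax e e0.
have [d1 d10 H1] := cf x Ax _ e0; have [d2 d20 H2] := cg x Ax _ e0.
exists (Num.min d1 d2); first by rewrite lt_min d10 d20.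
move=> y Ay; rewrite lt_min => /andP [h1 h2].
by apply: min_close; [exact: H1|exact: H2].
Qed.

Lemma ctsr_sum (I : Type) (r : seq I) (P : pred I) (F : I -> (T -> R) -> R) :
  (forall i, ctsr A (F i)) -> ctsr A (fun x => \sum_(i <- r | P i) F i x).
Proof.
move=> cF; elim: r => [|a r IH].
  by apply: ctsr_ext (ctsr_const 0) => x; rewrite big_nil.
case Pa: (P a).
  by apply: ctsr_ext (ctsr_add (cF a) IH) => x; rewrite big_cons Pa.
by apply: ctsr_ext IH => x; rewrite big_cons Pa.
Qed.

End Cont.

Lemma cont_on_coord (R : realType) (T U : finType) (A : (T -> R) -> Prop) (F : (T -> R) -> U -> R) :
  (forall u, ctsr A (fun x => F x u)) -> cont_on A F.
Proof.
move=> cF x Ax e e0.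
suff [d d0 H] : exists2 d : R, 0 < d & forall u, u \in index_enum U ->
    forall y, A y -> dist x y < d -> `|F x u - F y u| < e.
  exists d => // y Ay h; apply: dist_lt => // u; apply: H => //; exact: mem_index_enum.
elim: (index_enum U) => [|a r [d d0 H]]; first by exists 1.
have [d' d0' H'] := cF a x Ax e e0.
exists (Num.min d d'); first by rewrite lt_min d0 d0'.
move=> u; rewrite inE => /orP [/eqP ->|ur] y Ay; rewrite lt_min => /andP [h1 h2].
  exact: H'.
exact: H.
Qed.

End M1.
Import M1.

Module M2.
Local Open Scope ring_scope.

Definition o0 : 'I_3 := @Ordinal 3 0 isT.
Definition o1 : 'I_3 := @Ordinal 3 1 isT.
Definition o2 : 'I_3 := @Ordinal 3 2 isT.
Definition b0 : 'I_2 := @Ordinal 2 0 isT.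
Definition b1 : 'I_2 := @Ordinal 2 1 isT.
Definition w2 (b : 'I_2) : 'I_3 := if b == b0 then o0 else o1.
Definition n32 (j : 'I_3) : 'I_2 := if j == o1 then b1 else b0.

Lemma I3_cases (j : 'I_3) : [\/ j = o0, j = o1 | j = o2].
Proof.
case: j => [[|[|[|k]]] H]; [apply: Or31|apply: Or32|apply: Or33|by []]; exact: val_inj.
Qed.

Lemma I2_cases (b : 'I_2) : b = b0 \/ b = b1.
Proof. case: b => [[|[|k]] H]; [left|right|by []]; exact: val_inj. Qed.

Section Abstract.
Variables (R : realType) (T V : finType) (K : {set {set T}}) (E : V * 'I_3 -> T) (m : nat).
Hypothesis Einj : injective E.
Hypothesis hK : forall F : {set T}, (F \in K) =
  (F \subset [set E p | p : V * 'I_3]) && [forall v, exists j, E (v, j) \notin F].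
Hypothesis hm : m.+1 = #|{: V * 'I_2}|.

Definition kap (p : V * 'I_2) : 'I_m.+1 := cast_ord (esym hm) (enum_rank p).
Definition iot (i : 'I_m.+1) : V * 'I_2 := enum_val (cast_ord hm i).

Lemma iotK : cancel iot kap.
Proof. by move=> i; rewrite /kap /iot enum_valK cast_ordK. Qed.
Lemma kapK : cancel kap iot.
Proof. by move=> p; rewrite /kap /iot cast_ordKV enum_rankK. Qed.

Definition Pf (x : T -> R) (i : 'I_m.+1) : R :=
  x (E ((iot i).1, w2 (iot i).2)) - x (E ((iot i).1, o2)).
Definition Sx (x : T -> R) : R := \sum_i Pf x i ^+ 2.
Definition ff (x : T -> R) (i : 'I_m.+1) : R := Pf x i / Num.sqrt (Sx x).

Definition mn (z : 'I_m.+1 -> R) (v : V) : R :=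
  Num.min (z (kap (v, b0))) (Num.min (z (kap (v, b1))) 0).
Definition Cg (z : 'I_m.+1 -> R) (p : V * 'I_3) : R :=
  if p.2 == o2 then - mn z p.1 else z (kap (p.1, n32 p.2)) - mn z p.1.
Definition kz (z : 'I_m.+1 -> R) : R := \sum_p Cg z p.
Definition gg (z : 'I_m.+1 -> R) (t : T) : R :=
  match [pick p | E p == t] with Some p => Cg z p / kz z | None => 0 end.

Lemma pickE p : [pick q | E q == E p] = Some p.
Proof.
case: pickP => [q /eqP /Einj -> //|/(_ p)]; by rewrite eqxx.
Qed.

Lemma ggE z p : gg z (E p) = Cg z p / kz z.
Proof. by rewrite /gg pickE. Qed.

Lemma ggN z t : (forall p, E p != t) -> gg z t = 0.
Proof. by move=> H; rewrite /gg; case: pickP => // p; rewrite (negbTE (H p)). Qed.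

Lemma mn_le0 z v : mn z v <= 0.
Proof. by rewrite /mn !ge_min lexx !orbT. Qed.

Lemma Cg_ge0 z p : 0 <= Cg z p.
Proof.
rewrite /Cg /mn; case: ifP => _.
  by rewrite oppr_ge0 !ge_min lexx !orbT.
rewrite subr_ge0; case: (I2_cases (n32 p.2)) => ->; by rewrite !ge_min lexx ?orbT.
Qed.

Lemma Cg2 z v : Cg z (v, o2) = - mn z v.
Proof. by rewrite /Cg eqxx. Qed.

Lemma Cgw z v b : Cg z (v, w2 b) = z (kap (v, b)) - mn z v.
Proof. by case: (I2_cases b) => ->. Qed.



Lemma Cg_zero z v : exists j, Cg z (v, j) = 0.
Proof.
rewrite /Cg /mn /=.
set a := z (kap (v, b0)); set b := z (kap (v, b1)).
have nb0 : n32 o0 = b0 by []. have nb1 : n32 o1 = b1 by [].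
case: (ltrP b 0) => h1.
  case: (ltrP a b) => h2.
    by exists o0; rewrite nb0 -/a subrr.
  by exists o1; rewrite nb1 -/b subrr.
case: (ltrP a 0) => h2.
  by exists o0; rewrite nb0 -/a subrr.
by exists o2; rewrite eqxx oppr0.
Qed.

Lemma Cg_diff z v b : Cg z (v, w2 b) - Cg z (v, o2) = z (kap (v, b)).
Proof. rewrite Cgw Cg2; ring. Qed.

Definition imE : {set T} := [set E p | p : V * 'I_3].

Lemma sum_imE (F : T -> R) : (forall t, t \notin imE -> F t = 0) ->
  \sum_t F t = \sum_p F (E p).
Proof.
move=> H.
rewrite (bigID (fun t => t \in imE)) /= [X in _ + X]big1 ?addr0; last first.
  by move=> t /H.
rewrite /imE big_imset //=; last by move=> p q _ _ /Einj.
Qed.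

Lemma min3_eq (p q r t : R) : t <= p -> t <= q -> t <= r ->
  [\/ p = t, q = t | r = t] -> Num.min p (Num.min q r) = t.
Proof.
move=> hp hq hr H; case: (ltrP q r) => h1.
  case: (ltrP p q) => h2; case: H => H; lra.
case: (ltrP p r) => h2; case: H => H; lra.
Qed.

Section Real.
Variable x : T -> R.
Hypothesis Ax : realization R K x.

Lemma x_ge0 t : 0 <= x t.
Proof. by case: Ax => H _. Qed.

Lemma x_off t : t \notin imE -> x t = 0.
Proof.
case: Ax => _ [_ HK] tn; apply/eqP; apply/negPn/negP => xt.
move: HK; rewrite hK => /andP [/subsetP sub _].
by move: tn; rewrite sub // inE.
Qed.

Lemma x_zero v : exists j, x (E (v, j)) = 0.
Proof.
case: Ax => _ [_]; rewrite hK => /andP [_ /forallP /(_ v) /existsP [j]].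
by rewrite inE negbK => /eqP h; exists j.
Qed.

Lemma x_sum : \sum_p x (E p) = 1.
Proof. by case: Ax => _ [H _]; rewrite -H (sum_imE x_off). Qed.

Lemma Pf_nz : exists i, Pf x i != 0.
Proof.
have [t xt] : exists t, x t != 0.
  case: (boolP [exists t, x t != 0]) => [/existsP //|/existsPn H]; exfalso.
  case: Ax => _ [S _]; move: S; rewrite big1 => [/eqP|t _]; first by rewrite eq_sym oner_eq0.
  by move: (H t); rewrite negbK => /eqP.
have : t \in imE by apply/negPn/negP => /x_off; apply/eqP.
case/imsetP => [[v j] _ tE].
have [j0 xj0] := x_zero v.
case: (boolP (x (E (v, o0)) == x (E (v, o2)))) => h0; last first.
  by exists (kap (v, b0)); rewrite /Pf kapK /= subr_eq0.
case: (boolP (x (E (v, o1)) == x (E (v, o2)))) => h1; last first.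
  by exists (kap (v, b1)); rewrite /Pf kapK /= subr_eq0.
exfalso; move: xt; rewrite tE.
have all : forall k, x (E (v, k)) = x (E (v, o2)).
  by move=> k; case: (I3_cases k) => ->; [exact/eqP|exact/eqP|].
by rewrite all -(all j0) xj0 eqxx.
Qed.

Lemma Sx_gt0 : 0 < Sx x.
Proof.
have [i Hi] := Pf_nz.
rewrite /Sx (bigD1 i) //= ltr_wpDr ?sumr_ge0 // => [j _|]; first exact: sqr_ge0.
by rewrite exprn_even_gt0 // Hi orbT.
Qed.

Let s := Num.sqrt (Sx x).
Lemma s_gt0 : 0 < s.
Proof. by rewrite sqrtr_gt0 Sx_gt0. Qed.

Lemma ff_sphere : sphere R m (ff x).
Proof.
rewrite /sphere /ff.
under eq_bigr do rewrite expr_div_n.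
rewrite -mulr_suml sqr_sqrtr; last exact: ltW Sx_gt0.
by rewrite mulfV // gt_eqF // Sx_gt0.
Qed.

Lemma ff_kap v b : ff x (kap (v, b)) = (x (E (v, w2 b)) - x (E (v, o2))) / s.
Proof. by rewrite /ff /Pf kapK. Qed.

Lemma mn_ff v : mn (ff x) v = - x (E (v, o2)) / s.
Proof.
have s0 := s_gt0.
rewrite /mn !ff_kap /=.
have [j xj] := x_zero v.
have e0 : (x (E (v, o0)) - x (E (v, o2))) / s - (- x (E (v, o2)) / s) = x (E (v, o0)) / s.
  by rewrite -mulrBl; congr (_ / _); ring.
have e1 : (x (E (v, o1)) - x (E (v, o2))) / s - (- x (E (v, o2)) / s) = x (E (v, o1)) / s.
  by rewrite -mulrBl; congr (_ / _); ring.
have g0 : 0 <= x (E (v, o0)) / s by rewrite divr_ge0 ?x_ge0 // ltW.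
have g1 : 0 <= x (E (v, o1)) / s by rewrite divr_ge0 ?x_ge0 // ltW.
have g2 : 0 <= x (E (v, o2)) / s by rewrite divr_ge0 ?x_ge0 // ltW.
have n2 : - x (E (v, o2)) / s = - (x (E (v, o2)) / s) by rewrite mulNr.
apply: min3_eq; try lra.
case: (I3_cases j) => ej; rewrite ej in xj.
- apply: Or31; move: e0; rewrite xj mul0r; lra.
- apply: Or32; move: e1; rewrite xj mul0r; lra.
- apply: Or33; move: n2; rewrite xj mul0r; lra.
Qed.

Lemma Cg_ff p : Cg (ff x) p = x (E p) / s.
Proof.
case: p => v j; case: (I3_cases j) => ->.
- rewrite (_ : o0 = w2 b0) // Cgw ff_kap mn_ff; rewrite -mulrBl; congr (_ / _); ring.
- rewrite (_ : o1 = w2 b1) // Cgw ff_kap mn_ff; rewrite -mulrBl; congr (_ / _); ring.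
- by rewrite Cg2 mn_ff mulNr opprK.
Qed.

Lemma kz_ff : kz (ff x) = s^-1.
Proof.
rewrite /kz; under eq_bigr do rewrite Cg_ff.
by rewrite -mulr_suml x_sum mul1r.
Qed.

Lemma gg_ff : gg (ff x) = x.
Proof.
apply: functional_extensionality => t.
case: (boolP (t \in imE)) => ht.
  case/imsetP: ht => p _ ->.
  rewrite ggE Cg_ff kz_ff invrK -mulrA mulVf ?mulr1 //.
  by rewrite gt_eqF // s_gt0.
rewrite ggN ?x_off // => p; apply: contraNneq ht => <-.
by apply/imsetP; exists p.
Qed.

End Real.

Section Sph.
Variable z : 'I_m.+1 -> R.
Hypothesis Hz : sphere R m z.

Lemma z_nz : exists i, z i != 0.
Proof.
case: (boolP [exists i, z i != 0]) => [/existsP //|/existsPn H]; exfalso.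
move: Hz; rewrite /sphere big1 => [/eqP|i _]; first by rewrite eq_sym oner_eq0.
by move: (H i); rewrite negbK => /eqP ->; rewrite expr0n.
Qed.

Lemma kz_gt0 : 0 < kz z.
Proof.
have [i zi] := z_nz.
have ge : forall p, Cg z p <= kz z.
  by move=> p; rewrite /kz (bigD1 p) //= lerDl sumr_ge0 // => q _; exact: Cg_ge0.
have := Cg_diff z (iot i).1 (iot i).2; rewrite -surjective_pairing iotK => d.
have g1 := Cg_ge0 z ((iot i).1, w2 (iot i).2).
have g2 := Cg_ge0 z ((iot i).1, o2).
have k1 := ge ((iot i).1, w2 (iot i).2).
have k2 := ge ((iot i).1, o2).
case: (ltrgtP (z i) 0) => h; [lra|lra|by move: zi; rewrite h eqxx].
Qed.

Lemma gg_real : realization R K (gg z).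
Proof.
have k0 := kz_gt0.
have gN : forall t, t \notin imE -> gg z t = 0.
  by move=> t ht; apply: ggN => p; apply: contraNneq ht => <-; apply/imsetP; exists p.
split; [|split].
- move=> t; rewrite /gg; case: pickP => // p _.
  by rewrite divr_ge0 ?Cg_ge0 // ltW.
- rewrite (sum_imE gN); under eq_bigr do rewrite ggE.
  by rewrite -mulr_suml mulfV // gt_eqF.
- rewrite hK; apply/andP; split.
    apply/subsetP => t; rewrite inE; apply: contraR => ht.
    by rewrite gN // eqxx.
  apply/forallP => v; apply/existsP; have [j hj] := Cg_zero z v.
  by exists j; rewrite inE ggE hj mul0r eqxx.
Qed.

Lemma Pf_gg i : Pf (gg z) i = z i / kz z.
Proof.
by rewrite /Pf !ggE -mulrBl Cg_diff -surjective_pairing iotK.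
Qed.

Lemma ff_gg : ff (gg z) = z.
Proof.
have k0 := kz_gt0.
apply: functional_extensionality => i.
have S : Sx (gg z) = (kz z)^-1 ^+ 2.
  rewrite /Sx; under eq_bigr do rewrite Pf_gg expr_div_n.
  by rewrite -mulr_suml Hz mul1r exprVn.
rewrite /ff Pf_gg S sqrtr_sqr ger0_norm ?invr_ge0 ?ltW // invrK -mulrA mulVf ?mulr1 //.
by rewrite gt_eqF.
Qed.

End Sph.

Lemma ctsr_Pf i : ctsr (realization R K) (fun x => Pf x i).
Proof. by apply: ctsr_sub; apply: ctsr_coord. Qed.

Lemma ctsr_Sx : ctsr (realization R K) Sx.
Proof.
rewrite /Sx; apply: (ctsr_ext (f := fun x => \sum_(i <- index_enum _ | true) (fun i x => Pf x i * Pf x i) i x)).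
  by move=> x; apply: eq_bigr => i _; rewrite expr2.
by apply: ctsr_sum => i; apply: ctsr_mul; apply: ctsr_Pf.
Qed.

Lemma cont_ff : cont_on (realization R K) ff.
Proof.
apply: cont_on_coord => i; rewrite /ff.
apply: ctsr_mul; first exact: ctsr_Pf.
apply: ctsr_inv.
  apply: ctsr_sqrt; [exact: ctsr_Sx| |by move=> x Ax; apply: Sx_gt0].
  by move=> x; apply: sumr_ge0 => j _; apply: sqr_ge0.
by move=> x Ax; rewrite gt_eqF // sqrtr_gt0 Sx_gt0.
Qed.

Lemma ctsr_mn v : ctsr (sphere R m) (fun z => mn z v).
Proof.
by apply: ctsr_min; [apply: ctsr_coord|apply: ctsr_min; [apply: ctsr_coord|apply: ctsr_const]].
Qed.

Lemma ctsr_Cg p : ctsr (sphere R m) (fun z => Cg z p).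
Proof.
rewrite /Cg; case: (p.2 == o2); first by apply: ctsr_opp; apply: ctsr_mn.
by apply: ctsr_sub; [apply: ctsr_coord|apply: ctsr_mn].
Qed.

Lemma cont_gg : cont_on (sphere R m) gg.
Proof.
apply: cont_on_coord => t; rewrite /gg; case: pickP => [p _|_]; last exact: ctsr_const.
apply: ctsr_mul; first exact: ctsr_Cg.
apply: ctsr_inv; last by move=> z Hz; rewrite gt_eqF // kz_gt0.
rewrite /kz; apply: (ctsr_ext (f := fun z => \sum_(q <- index_enum _ | true) (fun q z => Cg z q) q z)) => //.
by apply: ctsr_sum => q; apply: ctsr_Cg.
Qed.

Lemma homot_id (U : finType) (B : (U -> R) -> Prop) (h : (U -> R) -> (U -> R)) :
  (forall x, B x -> h x = x) -> homotopy_on B (fun _ x => x) h id.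
Proof.
move=> hh; split.
- by [].
- move=> t x _ Bx e e0; exists e => // s y _ _ _ h1; by rewrite distC.
- by move=> x Bx; rewrite hh.
- by [].
Qed.

Theorem abstract_he : homotopy_equivalent R (realization R K) (sphere R m).
Proof.
exists ff, gg; split; [split|split].
- by move=> x Ax; apply: ff_sphere.
- by move=> z Hz; apply: gg_real.
- exact: cont_ff.
- exact: cont_gg.
- by exists (fun _ x => x); apply: homot_id => x Ax; rewrite gg_ff.
- by exists (fun _ x => x); apply: homot_id => z Hz; rewrite ff_gg.
Qed.

End Abstract.

End M2.
Import M2.


Section Claw.
Variables (V : finType) (adj : rel V).
Hypothesis adj_sym : symmetric adj.
Hypothesis adj_irr : irreflexive adj.
Hypothesis deg_le : forall v, deg adj v <= 3.

Local Notation CV := (claw_vertex V).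
Local Notation cadj := (claw_adj adj).

Lemma cadj_inl v y : cadj (inl v) y = claw_half adj (inl v) y.
Proof. by rewrite /claw_adj; case: y => [w|[s|[w i]]] //=; rewrite orbF. Qed.

Lemma cadj_inl_inl v w : cadj (inl v) (inl w) = false.
Proof. by rewrite cadj_inl. Qed.

Lemma cadj_inv x y : cadj x y -> exists v, (x = inl v /\ cadj (inl v) y) \/ (y = inl v /\ cadj (inl v) x).
Proof.
rewrite /claw_adj; case: x => [v|x]; case: y => [w|y] //=.
- by move=> h; exists v; left; split => //; rewrite cadj_inl.
- by move=> h; exists w; right; split => //; rewrite orbF.
Qed.

Definition nb (v : V) : {set CV} := [set y | cadj (inl v) y].

Lemma card_edges_at v : #|[set s in edges adj | v \in s]| = deg adj v.
Proof.
have inj : {in [set u | adj v u] &, injective (fun u => [set v; u])}.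
  move=> u u'; rewrite !inE => hu hu' e.
  have : u \in [set v; u'] by rewrite -e !inE eqxx orbT.
  rewrite !inE => /orP [/eqP h|/eqP //]; by move: hu; rewrite -h adj_irr.
rewrite /deg -(card_in_imset inj); apply: eq_card => s.
rewrite /edges !inE; apply/andP/imsetP.
- case => /existsP [a /existsP [b /andP [ab /eqP ->]]].
  rewrite !inE => /orP [/eqP e|/eqP e]; [subst a|subst b].
    by exists b => //; rewrite inE.
  by exists a; rewrite ?inE 1?adj_sym // setUC.
- case => u; rewrite inE => vu ->; split; last by rewrite !inE eqxx.
  by apply/existsP; exists v; apply/existsP; exists u; rewrite vu eqxx.
Qed.

Lemma card_lt3 k : k <= 3 -> #|[set i : 'I_3 | i < k]| = k.
Proof.
move=> hk.
have -> : [set i : 'I_3 | i < k] = [set widen_ord hk j | j : 'I_k].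
  apply/setP => i; rewrite inE; apply/idP/imsetP.
    by move=> ik; exists (Ordinal ik) => //; apply: val_inj.
  by case=> j _ ->; rewrite /= ltn_ord.
rewrite card_imset ?card_ord //; by move=> a b /(congr1 val) /= h; apply: val_inj.
Qed.

Definition fs (s : {set V}) : CV := inr (inl s).
Definition fl (v : V) (i : 'I_3) : CV := inr (inr (v, i)).

Lemma nb_eq v : nb v = fs @: [set s in edges adj | v \in s] :|: fl v @: [set i : 'I_3 | i < 3 - deg adj v].
Proof.
apply/setP => y; rewrite !inE cadj_inl.
case: y => [w|[s|[w i]]] /=.
- apply/esym/norP; split; apply/imsetP; case=> ? _ //.
- have fsi : injective fs by move=> a b [].
  rewrite (mem_imset _ _ fsi) inE.
  have -> : (fs s \in fl v @: [set i : 'I_3 | i < 3 - deg adj v]) = false.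
    by apply/imsetP; case=> ? _.
  by rewrite orbF inE /edges inE.
- have -> : (fl w i \in fs @: [set s in edges adj | v \in s]) = false.
    by apply/imsetP; case=> ? _.
  rewrite /=; apply/andP/imsetP.
    by case=> /eqP <- hi; exists i; rewrite ?inE.
  by case=> j; rewrite inE => hj [-> ->].
Qed.

Lemma card_nb v : #|nb v| = 3.
Proof.
rewrite nb_eq cardsU.
have -> : fs @: [set s in edges adj | v \in s] :&: fl v @: [set i : 'I_3 | i < 3 - deg adj v] = set0.
  apply/setP => y; rewrite !inE; apply/negP => /andP [/imsetP [s _ ->] /imsetP [i _]] //.
rewrite cards0 subn0 !card_imset; last by move=> a b [].
  by rewrite card_edges_at card_lt3 ?leq_subr // subnKC.
by move=> a b [].
Qed.

Definition Ecl (p : V * 'I_3) : {set CV} := [set inl p.1; nth (inl p.1) (enum (nb p.1)) p.2].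

Lemma size_nb v : size (enum (nb v)) = 3.
Proof. by rewrite -cardE card_nb. Qed.

Lemma nth_nb v (j : 'I_3) : nth (inl v) (enum (nb v)) j \in nb v.
Proof. by rewrite -mem_enum mem_nth // size_nb. Qed.

Lemma nb_not_inl v y w : y \in nb v -> y != inl w.
Proof. by rewrite inE; apply: contraTneq => ->; rewrite cadj_inl_inl. Qed.

Lemma Ecl_inl v v' j : (inl v \in Ecl (v', j)) = (v == v').
Proof.
rewrite /Ecl !inE /=; case: (boolP (inl v == inl v' :> CV)) => [/eqP [->]|h]; first by rewrite eqxx.
rewrite /=; have := nb_not_inl v (nth_nb v' j); rewrite eq_sym => /negbTE ->.
by apply/esym/negP => /eqP hv; move: h; rewrite hv eqxx.
Qed.

Lemma Ecl_inj : injective Ecl.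
Proof.
move=> [v j] [v' j'] e.
have : inl v \in Ecl (v', j') by rewrite -e Ecl_inl.
rewrite Ecl_inl => /eqP ev; subst v'.
have : nth (inl v) (enum (nb v)) j \in Ecl (v, j') by rewrite -e !inE eqxx orbT.
rewrite !inE (negbTE (nb_not_inl v (nth_nb v j))) /=.
rewrite nth_uniq ?size_nb ?enum_uniq // => /eqP ejj.
by congr (_, _); apply: val_inj.
Qed.

Lemma edges_cl : edges cadj = [set Ecl p | p : V * 'I_3].
Proof.
have mk : forall v y, cadj (inl v) y -> [set inl v; y] \in [set Ecl p | p : V * 'I_3].
  move=> v y h; have yn : y \in enum (nb v) by rewrite mem_enum inE.
  have jl : index y (enum (nb v)) < 3 by rewrite -(size_nb v) index_mem.
  apply/imsetP; exists (v, Ordinal jl) => //.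
  by rewrite /Ecl /= nth_index.
apply/setP => e; rewrite /edges inE; apply/idP/idP.
- case/existsP => x /existsP [y /andP [hxy /eqP ->]].
  case: (cadj_inv hxy) => v [[-> h]|[-> h]]; first exact: mk.
  by rewrite setUC; apply: mk.
- case/imsetP => [[v j] _ ->]; apply/existsP; exists (inl v); apply/existsP.
  exists (nth (inl v) (enum (nb v)) j); rewrite eqxx andbT.
  by have := nth_nb v j; rewrite inE.
Qed.

Lemma card_att y : #|[set v | cadj (inl v) (inr y)]| <= 2.
Proof.
case: y => [s|[w i]].
  case: (boolP (s \in edges adj)) => hs.
    have sub : [set v | cadj (inl v) (inr (inl s))] \subset s.
      by apply/subsetP => v; rewrite inE cadj_inl /= => /andP [].
    apply: leq_trans (subset_leq_card sub) _.
    move: hs; rewrite /edges inE => /existsP [a /existsP [b /andP [_ /eqP ->]]].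
    by rewrite cards2; case: (a != b).
  have -> : [set v | cadj (inl v) (inr (inl s))] = set0.
    by apply/setP => v; rewrite !inE cadj_inl /= (negbTE hs).
  by rewrite cards0.
have sub : [set v | cadj (inl v) (inr (inr (w, i)))] \subset [set w].
  by apply/subsetP => v; rewrite !inE cadj_inl /= => /andP [].
by apply: leq_trans (subset_leq_card sub) _; rewrite cards1.
Qed.

Lemma M2_char F : (F \in M2 cadj) =
  (F \subset [set Ecl p | p : V * 'I_3]) && [forall v, exists j, Ecl (v, j) \notin F].
Proof.
rewrite /M2 inE edges_cl; case sub: (F \subset _) => //=.
apply/forallP/forallP.
- move=> H v; case: (boolP [exists j, Ecl (v, j) \notin F]) => // /existsPn all; exfalso.
  have := H (inl v).
  have s3 : [set Ecl (v, j) | j : 'I_3] \subset [set e in F | inl v \in e].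
    apply/subsetP => e /imsetP [j _ ->]; rewrite inE Ecl_inl eqxx andbT.
    by have := all j; rewrite negbK.
  have := subset_leq_card s3; rewrite card_imset ?card_ord; last first.
    by move=> a b /Ecl_inj [].
  by move=> h1 h2; have := leq_trans h1 h2.
- move=> H c; case: c => [v|y].
    have /existsP [j0 hj0] := H v.
    have s2 : [set e in F | inl v \in e] \subset [set Ecl (v, j) | j in [set~ j0]].
      apply/subsetP => e; rewrite inE => /andP [eF ve].
      have := subsetP sub e eF; case/imsetP => [[v' j'] _ ee].
      move: ve; rewrite ee Ecl_inl => /eqP ev; subst v'.
      apply/imsetP; exists j' => //; rewrite !inE.
      by apply: contraNneq hj0 => <-; rewrite -ee.
    apply: leq_trans (subset_leq_card s2) _.
    apply: leq_trans (leq_imset_card _ _) _.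
    by rewrite cardsC1 card_ord.
  have s2 : [set e in F | inr y \in e] \subset
      [set [set inl v; inr y] | v in [set v | cadj (inl v) (inr y)]].
    apply/subsetP => e; rewrite inE => /andP [eF ye].
    have := subsetP sub e eF; case/imsetP => [[v j] _ ee].
    move: ye; rewrite ee /Ecl !inE /= => /eqP hy.
    apply/imsetP; exists v.
      by rewrite inE hy; have := nth_nb v j; rewrite inE.
    by rewrite hy.
  apply: leq_trans (subset_leq_card s2) _.
  apply: leq_trans (leq_imset_card _ _) _.
  exact: card_att.
Qed.

End Claw.


Lemma card_ord_bound N (A : {set 'I_N}) (s : seq nat) :
  (forall u, u \in A -> val u \in s) -> #|A| <= size s.
Proof.
move=> H; rewrite cardE -(size_map val).
apply: uniq_leq_size; first by rewrite map_inj_uniq ?enum_uniq //; exact: val_inj.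
by move=> x /mapP [u]; rewrite mem_enum => /H h ->.
Qed.

Lemma path_sym k : symmetric (path_adj k).
Proof. by move=> i j; rewrite /path_adj orbC. Qed.

Lemma path_irr k : irreflexive (path_adj k).
Proof. by move=> i; apply/negP; rewrite /path_adj => /orP [] /eqP; lia. Qed.

Lemma path_deg k v : deg (path_adj k) v <= 3.
Proof.
apply: (@leq_trans 2) => //; apply: (card_ord_bound (s := [:: v.+1; v.-1])) => u.
rewrite inE /path_adj !inE => /orP [] /eqP h.
  by apply/orP; left; apply/eqP; rewrite /=; lia.
by apply/orP; right; apply/eqP; rewrite /=; lia.
Qed.

Lemma cycle_sym n : symmetric (cycle_adj n).
Proof. by move=> i j; rewrite /cycle_adj eq_sym orbC. Qed.

Lemma cycle_irr n : irreflexive (cycle_adj n).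
Proof. by move=> i; rewrite /cycle_adj eqxx. Qed.

Lemma cycle_deg n v : deg (cycle_adj n) v <= 3.
Proof.
apply: (card_ord_bound (s := [:: v.+1 %% n; v.-1; n.-1])) => u.
rewrite inE /cycle_adj !inE => /andP [_ /orP [] /eqP h].
  by rewrite h eqxx.
have un := ltn_ord u.
case: (ltnP u.+1 n) => hu.
  by move: h; rewrite modn_small // => h; apply/orP; right; apply/orP; left; apply/eqP; rewrite /=; lia.
have e : u.+1 = n by lia.
by apply/orP; right; apply/orP; right; apply/eqP; rewrite /=; lia.
Qed.

Theorem mainTheorem11 (R : realType) (n : nat) (hn : 3 <= n) :
  homotopy_equivalent R
    (realization R (M2 (claw_adj (path_adj (n - 1)))))
    (sphere R (2 * n - 1))
  /\
  homotopy_equivalent R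
    (realization R (M2 (claw_adj (cycle_adj n))))
    (sphere R (2 * n - 1)).
Proof.
split.
- apply: (@abstract_he R _ _ _ (Ecl (path_adj (n - 1)))).
  + apply: Ecl_inj; [exact: path_sym|exact: path_irr|exact: path_deg].
  + by move=> F; apply: M2_char; [exact: path_sym|exact: path_irr|exact: path_deg].
  + by rewrite card_prod !card_ord; lia.
- apply: (@abstract_he R _ _ _ (Ecl (cycle_adj n))).
  + apply: Ecl_inj; [exact: cycle_sym|exact: cycle_irr|exact: cycle_deg].
  + by move=> F; apply: M2_char; [exact: cycle_sym|exact: cycle_irr|exact: cycle_deg].
  + by rewrite card_prod !card_ord; lia.
Qed.
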